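(* Let $p\in[1,\infty)$, $w$ a weight sequence, and $A\subset L_{p,w}$ such that $\forall\varepsilon>0\ \exists N\in\mathbb{N}\ \forall a\in A\ \forall i\ge N:\ T_i(a)<\varepsilon$. Then the same holds for $A-A=\{a-b:a,b\in A\}$, i.e. $\forall\varepsilon>0\ \exists N\in\mathbb{N}\ \forall a,b\in A\ \forall i\ge N:\ T_i(a-b)<\varepsilon$.
   Context: A weight sequence is a sequence $w=(w_i)$ of positive reals with $w_1=1\ge w_2\ge\dots$, $w_i\to0$, and $\sum_i w_i=+\infty$. For a real sequence $a$, $\|a\|_{p,w}=\sup_{\sigma}\big(\sum_{i=1}^\infty |a_{\sigma_i}|^p w_i\big)^{1/p}$ over all permutations $\sigma$ of $\mathbb{N}$; $L_{p,w}$ is the set of real sequences with finite norm. $T_i(a)=\|(a_{i+1},a_{i+2},\dots)\|_{p,w}^p$ (the $p$-th power of the norm of the $i$-th tail). *)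

(* Defs.v *)
(* Sequences are 0-indexed: a k stands for a_{k+1}. *)
From HB Require Import structures.
From mathcomp Require Import all_boot all_order all_algebra.
From mathcomp Require Import all_classical all_reals all_analysis.
Set Implicit Arguments. Unset Strict Implicit. Unset Printing Implicit Defensive.
Import Order.TTheory GRing.Theory Num.Theory.
Local Open Scope classical_set_scope.
Local Open Scope ring_scope.

Definition weight_seq (R : realType) (w : nat -> R) : Prop :=
  [/\ w 0%N = 1,
      (forall k, 0 < w k),
      (forall k, w k.+1 <= w k),
      w @ \oo --> 0
    & (\sum_(k <oo) (w k)%:E = +oo)%E].

Definition lpw_pow (R : realType) (p : R) (w : nat -> R) (a : nat -> R) : \bar R :=
  ereal_sup [set (\sum_(k <oo) ((`|a (s k)| `^ p * w k)%:E))%E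
            | s in [set s : nat -> nat | bijective s]].

Definition lpw_norm (R : realType) (p : R) (w : nat -> R) (a : nat -> R) : \bar R :=
  (lpw_pow p w a `^ p^-1)%E.

Definition in_Lpw (R : realType) (p : R) (w : nat -> R) (a : nat -> R) : Prop :=
  (lpw_norm p w a < +oo)%E.

(* T_i(a) = || (a_{i+1}, a_{i+2}, ...) ||^p ; in 0-indexing the tail drops the first i entries *)
Definition tailT (R : realType) (p : R) (w : nat -> R) (i : nat) (a : nat -> R) : \bar R :=
  lpw_pow p w (fun k => a (k + i)%N).

(* Main.v *)
Require Import Defs.
From HB Require Import structures.
From mathcomp Require Import all_boot all_order all_algebra.
From mathcomp Require Import all_classical all_reals all_analysis.
From mathcomp Require Import ring lra.
Import Order.TTheory GRing.Theory Num.Theory.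
Local Open Scope classical_set_scope.
Local Open Scope ring_scope.

Lemma arith_aux (R : realFieldType) (K eps : R) : 0 < K -> 0 < eps ->
  K * (2 * (eps / (4 * K))) < eps.
Proof.
move=> K0 e0.
have -> : K * (2 * (eps / (4 * K))) = eps / 2 by field; rewrite gt_eqF.
lra.
Qed.

Lemma pow_ineq (R : realType) (p x y : R) : 0 <= p ->
  `|x - y| `^ p <= 2 `^ p * (`|x| `^ p + `|y| `^ p).
Proof.
move=> p0.
set m := Num.max `|x| `|y|.
have m0 : 0 <= m by rewrite le_max normr_ge0.
have h1 : `|x - y| <= 2 * m.
  apply: (le_trans (ler_normB x y)).
  have a : `|x| <= m by rewrite /m le_max lexx.
  have b : `|y| <= m by rewrite /m le_max lexx orbT.
  rewrite mulr2n mulrDl mul1r; exact: lerD.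
apply: (le_trans (ge0_ler_powR p0 _ _ h1)).
- by rewrite nnegrE normr_ge0.
- by rewrite nnegrE mulr_ge0.
rewrite powRM //; apply: ler_wpM2l; first exact: powR_ge0.
rewrite /m; case: (leP `|x| `|y|) => _.
- by rewrite lerDr powR_ge0.
- by rewrite lerDl powR_ge0.
Qed.

Lemma pow_bound (R : realType) (p : R) (w : nat -> R) (a b : nat -> R) :
  0 <= p -> (forall k, 0 < w k) ->
  (lpw_pow p w (fun k => (a k - b k)%R) <=
     (2 `^ p)%:E * (lpw_pow p w a + lpw_pow p w b))%E.
Proof.
move=> p0 w0.
apply: ge_ereal_sup => _ [s bs <-].
apply: (@le_trans _ _ ((2 `^ p)%:E *
   (\sum_(k <oo) ((`|a (s k)| `^ p * w k)%:E) +
    \sum_(k <oo) ((`|b (s k)| `^ p * w k)%:E)))%E).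
  rewrite -nneseriesD; [|by move=> *; rewrite lee_fin mulr_ge0 // ?powR_ge0 // ltW|by move=> *; rewrite lee_fin mulr_ge0 // ?powR_ge0 // ltW].
  rewrite -nneseriesZl; last by move=> *; rewrite adde_ge0 // lee_fin mulr_ge0 // ?powR_ge0 // ltW.
  apply: lee_nneseries; first by move=> *; rewrite lee_fin mulr_ge0 // ?powR_ge0 // ltW.
  move=> n _; rewrite -EFinD -EFinM lee_fin -mulrDl mulrA.
  apply: ler_wpM2r; first exact: ltW.
  exact: pow_ineq.
apply: lee_wpmul2l; first by rewrite lee_fin powR_ge0.
apply: leeD; apply: ereal_sup_ubound; by exists s.
Qed.

Theorem mainTheorem11 (R : realType) (p : R) (w : nat -> R) (A : set (nat -> R)) :
  1 <= p -> weight_seq w -> (forall a, A a -> in_Lpw p w a) ->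
  (forall eps : R, 0 < eps -> exists N : nat, forall a, A a ->
      forall i : nat, (N <= i)%N -> (tailT p w i a < eps%:E)%E) ->
  forall eps : R, 0 < eps -> exists N : nat, forall a b, A a -> A b ->
      forall i : nat, (N <= i)%N -> (tailT p w i (fun k => (a k - b k)%R) < eps%:E)%E.
Proof.
move=> p1 [_ w0 _ _ _] _ H eps eps0.
have p0 : 0 <= p by apply: le_trans p1.
set K := 2 `^ p.
have K0 : 0 < K by rewrite /K powR_gt0.
have e'0 : 0 < eps / (4 * K) by rewrite divr_gt0 // mulr_gt0.
have [N HN] := H _ e'0.
exists N => a b Aa Ab i Ni.
have := @pow_bound _ p w (fun k => a (k + i)%N) (fun k => b (k + i)%N) p0 w0.
rewrite -/K => hle; rewrite /tailT; apply: (le_lt_trans hle).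
apply: (@le_lt_trans _ _ (K%:E * (2 * (eps / (4 * K)))%:E)%E).
  apply: lee_wpmul2l; first by rewrite lee_fin ltW.
  rewrite mulr2n mulrDl mul1r EFinD.
  by apply: leeD; apply: ltW; [apply: HN Aa i Ni|apply: HN Ab i Ni].
rewrite -EFinM lte_fin.
exact: arith_aux.
Qed.
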